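(* Consider two pairs of lines in the plane. (1) If one pair consists of parallel lines, then the rectangle locus for the pairs is a line, a line missing an open segment, a point, or the empty set. (2) The rectangle locus is the entire plane if and only if each pair consists of orthogonal lines and all four lines meet at the same point. (3) Suppose neither pair consists of parallel lines. If the crossing points of the two pairs are different and either both pairs consist of orthogonal lines or one pair is a translation of the other, then the rectangle locus is a line.
   Context: A pair of lines means two distinct lines; two pairs of lines are distinct pairs, possibly sharing one line. The rectangle locus of two pairs $L_1,L_3$ and $L_2,L_4$ is the set of points $p$ in the plane that are the center of a (possibly degenerate) rectangle one of whose diagonals joins $L_1$ and $L_3$ and the other joins $L_2$ and $L_4$; equivalently, $p$ is the midpoint both of a segment joining $L_1$ and $L_3$ and of a segment joining $L_2$ and $L_4$, these two segments having equal length. A pair is a translation of the other if it is its image under a translation of the plane. *)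

(* Defs.v *)
From HB Require Import structures.
From mathcomp Require Import all_boot all_order all_algebra.
From mathcomp Require Import reals.
Set Implicit Arguments. Unset Strict Implicit. Unset Printing Implicit Defensive.
Import Order.TTheory GRing.Theory Num.Theory.
Local Open Scope ring_scope.

Section Plane.
Variable R : realType.
Definition pt := (R * R)%type.
Definition pset := pt -> Prop.

Definition line (p d : pt) : pset :=
  fun q => exists t : R, q = (p.1 + t * d.1, p.2 + t * d.2).

Definition is_line (L : pset) : Prop :=
  exists p d : pt, d != (0, 0) /\ L = line p d.

Definition par_lines (L L' : pset) : Prop :=
  exists p p' d : pt, d != (0, 0) /\ L = line p d /\ L' = line p' d.

Definition orth_lines (L L' : pset) : Prop :=
  exists p d p' d' : pt, d != (0, 0) /\ d' != (0, 0) /\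
    L = line p d /\ L' = line p' d' /\ d.1 * d'.1 + d.2 * d'.2 = 0.

Definition midpoint (a c : pt) : pt := ((a.1 + c.1) / 2, (a.2 + c.2) / 2).

Definition dist (a c : pt) : R :=
  Num.sqrt ((a.1 - c.1) ^+ 2 + (a.2 - c.2) ^+ 2).

Definition rect_locus (L1 L3 L2 L4 : pset) : pset :=
  fun p => exists a c b d : pt,
    L1 a /\ L3 c /\ L2 b /\ L4 d /\
    p = midpoint a c /\ p = midpoint b d /\ dist a c = dist b d.

Definition translate (v : pt) (L : pset) : pset :=
  fun q => L (q.1 - v.1, q.2 - v.2).

Definition pair_translation (L1 L3 L2 L4 : pset) : Prop :=
  exists v : pt,
    (L2 = translate v L1 /\ L4 = translate v L3) \/
    (L2 = translate v L3 /\ L4 = translate v L1).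

Definition open_segment (u v : pt) : pset :=
  fun q => exists t : R, 0 < t < 1 /\
    q = ((1 - t) * u.1 + t * v.1, (1 - t) * u.2 + t * v.2).

Definition empty_pset : pset := fun _ => False.
Definition full_pset : pset := fun _ => True.
End Plane.

(* Main.v *)
Require Import Defs.
From HB Require Import structures.
From mathcomp Require Import all_boot all_order all_algebra.
From mathcomp Require Import reals ring lra.
From Stdlib Require Import FunctionalExtensionality PropExtensionality.
Import Order.TTheory GRing.Theory Num.Theory.
Local Open Scope ring_scope.
Set Implicit Arguments. Unset Strict Implicit.

Definition cross {R : realType} (u v : pt R) : R := u.1 * v.2 - u.2 * v.1.
Definition dot {R : realType} (u v : pt R) : R := u.1 * v.1 + u.2 * v.2.
Definition nrm2 {R : realType} (u : pt R) : R := u.1 ^+ 2 + u.2 ^+ 2.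
Definition psub {R : realType} (u v : pt R) : pt R := (u.1 - v.1, u.2 - v.2).

Lemma pset_ext {R : realType} (S T : pset R) : (forall p, S p <-> T p) -> S = T.
Proof.
move=> H; apply: functional_extensionality => p; apply: propositional_extensionality; exact: H.
Qed.

Lemma nz_sq {R : realType} (d : pt R) : d != (0, 0) -> 0 < nrm2 d.
Proof.
case: d => x y; rewrite xpair_eqE negb_and /nrm2 /= => /orP [] H.
  have := sqr_ge0 y; have : 0 < x ^+ 2 by rewrite exprn_even_gt0 // H orbT.
  move=> *; lra.
have := sqr_ge0 x; have : 0 < y ^+ 2 by rewrite exprn_even_gt0 // H orbT.
move=> *; lra.
Qed.

Lemma nz_sq_neq {R : realType} (d : pt R) : d != (0, 0) -> nrm2 d != 0.
Proof. by move/nz_sq => H; rewrite gt_eqF. Qed.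

Lemma mul_both {R : realType} (d : pt R) (y : R) :
  d != (0, 0) -> y * d.1 = 0 -> y * d.2 = 0 -> y = 0.
Proof.
case: d => x z; rewrite xpair_eqE negb_and /= => /orP [] H H1 H2.
  by move/eqP: H1; rewrite mulf_eq0 (negPf H) orbF => /eqP.
by move/eqP: H2; rewrite mulf_eq0 (negPf H) orbF => /eqP.
Qed.

Lemma line_mem {R : realType} (p d q : pt R) :
  d != (0, 0) -> line p d q <-> cross (psub q p) d = 0.
Proof.
move=> dn; split.
  by case=> t ->; rewrite /cross /psub /=; ring.
move=> H; have n0 := nz_sq_neq dn.
exists (dot (psub q p) d / nrm2 d).
move: H n0; clear dn; case: q => q1 q2; case: p => p1 p2; case: d => x y.
rewrite /cross /psub /dot /nrm2 /= => H n0.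
congr pair.
  apply/eqP; rewrite -subr_eq0; apply/eqP.
  have -> : q1 - (p1 + ((q1 - p1) * x + (q2 - p2) * y) / (x ^+ 2 + y ^+ 2) * x)
     = y * ((q1 - p1) * y - (q2 - p2) * x) / (x ^+ 2 + y ^+ 2) by field.
  by rewrite H mulr0 mul0r.
apply/eqP; rewrite -subr_eq0; apply/eqP.
have -> : q2 - (p2 + ((q1 - p1) * x + (q2 - p2) * y) / (x ^+ 2 + y ^+ 2) * y)
   = - x * ((q1 - p1) * y - (q2 - p2) * x) / (x ^+ 2 + y ^+ 2) by field.
by rewrite H mulr0 mul0r.
Qed.

Lemma par_cross {R : realType} (x d d' : pt R) :
  d != (0, 0) -> cross x d = 0 -> cross d d' = 0 -> cross x d' = 0.
Proof.
move=> dn H1 H2; apply: (mul_both dn).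
  have -> : cross x d' * d.1 = cross x d * d'.1 + x.1 * cross d d' by rewrite /cross; ring.
  by rewrite H1 H2; ring.
have -> : cross x d' * d.2 = cross x d * d'.2 + x.2 * cross d d' by rewrite /cross; ring.
by rewrite H1 H2; ring.
Qed.

Lemma cross_anti {R : realType} (x y : pt R) : cross x y = - cross y x.
Proof. rewrite /cross; ring. Qed.

Lemma cross_psub {R : realType} (q p p' d : pt R) :
  cross (psub q p') d = cross (psub q p) d - cross (psub p' p) d.
Proof. rewrite /cross /psub /=; ring. Qed.

Lemma line_ext {R : realType} (p d p' d' : pt R) :
  d != (0, 0) -> d' != (0, 0) -> cross d d' = 0 -> cross (psub p' p) d = 0 ->
  line p d = line p' d'.
Proof.
move=> dn dn' H1 H2; apply: pset_ext => q; rewrite !line_mem //; split => H.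
  apply: (par_cross dn) => //; by rewrite (cross_psub q p p') H H2 subr0.
have H3 : cross d' d = 0 by rewrite cross_anti H1 oppr0.
have := par_cross dn' H H3; rewrite (cross_psub q p p') H2 subr0 => //.
Qed.

Lemma line_dir {R : realType} (p d q e : pt R) :
  d != (0, 0) -> e != (0, 0) -> line p d = line q e -> cross d e = 0.
Proof.
move=> dn en E.
have h1 : line q e p by rewrite -E; exists 0; case: p {E} => *; rewrite /= !mul0r !addr0.
have h2 : line q e (p.1 + d.1, p.2 + d.2) by rewrite -E; exists 1; rewrite !mul1r.
move: h1 h2; rewrite !line_mem // => h1 h2.
have -> : cross d e = cross (psub (p.1 + d.1, p.2 + d.2) q) e - cross (psub p q) e
  by rewrite /cross /psub /=; ring.
by rewrite h1 h2 subr0.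
Qed.

Lemma indep {R : realType} (d e : pt R) (x y : R) :
  cross d e != 0 -> x * d.1 + y * e.1 = 0 -> x * d.2 + y * e.2 = 0 -> x = 0 /\ y = 0.
Proof.
move=> D H1 H2; split.
  apply: (mulIf D); rewrite mul0r.
  have -> : x * cross d e = (x * d.1 + y * e.1) * e.2 - (x * d.2 + y * e.2) * e.1
    by rewrite /cross; ring.
  by rewrite H1 H2; ring.
apply: (mulIf D); rewrite mul0r.
have -> : y * cross d e = (x * d.2 + y * e.2) * d.1 - (x * d.1 + y * e.1) * d.2
  by rewrite /cross; ring.
by rewrite H1 H2; ring.
Qed.

Lemma meet {R : realType} (p d q e : pt R) :
  d != (0, 0) -> e != (0, 0) -> cross d e != 0 ->
  exists o, line p d = line o d /\ line q e = line o e.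
Proof.
move=> dn en D.
set s := cross (psub q p) e / cross d e.
exists (p.1 + s * d.1, p.2 + s * d.2); split.
  apply: line_ext => //; rewrite /cross /psub /=; ring.
apply: line_ext => //; first by rewrite /cross; ring.
rewrite /s /cross /psub /=; field.
by move: D; rewrite /cross.
Qed.

Lemma meet_uniq {R : realType} (o d e x : pt R) :
  cross d e != 0 -> line o d x -> line o e x -> x = o.
Proof.
move=> D [s ->] [t E].
have [h1 h2] : s * d.1 + (- t) * e.1 = 0 /\ s * d.2 + (- t) * e.2 = 0.
  by move: E => [E1 E2]; split; lra.
have [-> _] := indep D h1 h2.
by case: o {E} => a b; rewrite /= !mul0r !addr0.
Qed.

Lemma par_iff {R : realType} (p d p' d' : pt R) :
  d != (0, 0) -> d' != (0, 0) ->
  par_lines (line p d) (line p' d') <-> cross d d' = 0.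
Proof.
move=> dn dn'; split.
  move=> [q [q' [e [en [E1 E2]]]]].
  have h1 := line_dir dn en E1; have h2 := line_dir dn' en E2.
  apply: (par_cross en h1); by rewrite cross_anti h2 oppr0.
move=> H; exists p, p', d; split => //; split => //.
apply: line_ext => //; first by rewrite cross_anti H oppr0.
rewrite /cross /psub /=; ring.
Qed.

Lemma translate_line {R : realType} (v p d : pt R) :
  translate v (line p d) = line (p.1 + v.1, p.2 + v.2) d.
Proof.
apply: pset_ext => q; rewrite /translate /line; split.
  move=> [t [E1 E2]]; exists t; case: q E1 E2 => a b /= E1 E2; congr pair; lra.
move=> [t ->]; exists t; rewrite /=; congr pair; ring.
Qed.

Lemma linear_line {R : realType} (k1 k2 k0 : R) :
  (k1, k2) != (0, 0) -> is_line (fun p : pt R => k1 * p.1 + k2 * p.2 = k0).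
Proof.
move=> kn; have n0 := nz_sq_neq kn.
have dn : (- k2, k1) != (0, 0).
  move: kn; rewrite !xpair_eqE oppr_eq0; by rewrite andbC.
exists (k0 * k1 / nrm2 (k1, k2), k0 * k2 / nrm2 (k1, k2)), (- k2, k1); split => //.
apply: pset_ext => q; rewrite line_mem //.
have -> : cross (psub q (k0 * k1 / nrm2 (k1, k2), k0 * k2 / nrm2 (k1, k2))) (- k2, k1)
   = k1 * q.1 + k2 * q.2 - k0.
  move: n0; rewrite /cross /psub /nrm2 /= => n0; field; done.
split => H; lra.
Qed.

Definition alw {R : realType} (d e w : pt R) : R := 2 * (w.1 * e.2 - w.2 * e.1) / cross d e.
Definition bew {R : realType} (d e w : pt R) : R := 2 * (d.1 * w.2 - d.2 * w.1) / cross d e.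
Definition mm {R : realType} (d e w : pt R) : pt R :=
  (alw d e w * d.1 - bew d e w * e.1, alw d e w * d.2 - bew d e w * e.2).
Definition Phi {R : realType} (o d e p : pt R) : R := nrm2 (mm d e (psub p o)).

Definition MP {R : realType} (L L' : pset R) (p : pt R) (r : R) : Prop :=
  exists a c, L a /\ L' c /\ p = midpoint a c /\ nrm2 (psub a c) = r.

Lemma dist_eq {R : realType} (a c b d : pt R) :
  dist a c = dist b d <-> nrm2 (psub a c) = nrm2 (psub b d).
Proof.
rewrite /dist /nrm2 /psub /=; split => [H|->] //.
apply/eqP; rewrite -eqr_sqrt ?H //; by apply: addr_ge0; apply: sqr_ge0.
Qed.

Lemma locus_MP {R : realType} (L1 L3 L2 L4 : pset R) p :
  rect_locus L1 L3 L2 L4 p <-> exists r, MP L1 L3 p r /\ MP L2 L4 p r.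
Proof.
split.
  move=> [a [c [b [d [h1 [h3 [h2 [h4 [e1 [e2 e3]]]]]]]]]].
  exists (nrm2 (psub a c)); split; first by exists a, c.
  move/dist_eq: e3 => e3.
  by exists b, d; do 3 (split => //).
move=> [r [[a [c [h1 [h3 [e1 e2]]]]] [b [d [h2 [h4 [e3 e4]]]]]]].
exists a, c, b, d; do 6 (split => //); by apply/dist_eq; rewrite e2 e4.
Qed.

Lemma MP_swap {R : realType} (L L' : pset R) p r : MP L L' p r -> MP L' L p r.
Proof.
move=> [a [c [h1 [h2 [e1 e2]]]]]; exists c, a; do 2 (split => //); split.
  by rewrite e1 /midpoint; congr pair; congr (_ / _); rewrite addrC.
by rewrite -e2 /nrm2 /psub /=; ring.
Qed.

Lemma locus_sym {R : realType} (L1 L3 L2 L4 : pset R) :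
  rect_locus L1 L3 L2 L4 = rect_locus L2 L4 L1 L3.
Proof.
apply: pset_ext => p; rewrite !locus_MP; split; by move=> [r [h1 h2]]; exists r.
Qed.

Lemma locus_swap {R : realType} (L1 L3 L2 L4 : pset R) :
  rect_locus L1 L3 L2 L4 = rect_locus L1 L3 L4 L2.
Proof.
apply: pset_ext => p; rewrite !locus_MP; split; by move=> [r [h1 /MP_swap h2]]; exists r.
Qed.

Lemma pairA {R : realType} (o d e p : pt R) r :
  cross d e != 0 -> (MP (line o d) (line o e) p r <-> r = Phi o d e p).
Proof.
move=> D; split.
  move=> [a [c [[s ->] [[t ->] [-> <-]]]]].
  move: D; rewrite /Phi /mm /alw /bew /nrm2 /cross /psub /midpoint /= => D.
  field; done.
move=> ->.
set al := alw d e (psub p o); set be := bew d e (psub p o).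
exists (o.1 + al * d.1, o.2 + al * d.2), (o.1 + be * e.1, o.2 + be * e.2).
split; first by exists al.
split; first by exists be.
split.
  rewrite /al /be; move: D; clear al be; rewrite /alw /bew /cross /psub /midpoint /=.
  case: p => p1 p2 /= D; congr pair; field; done.
by rewrite /Phi /mm /nrm2 /psub /= -/al -/be; ring.
Qed.

Lemma Phi_alt {R : realType} (o d e p : pt R) :
  cross d e != 0 ->
  Phi o d e p = (2 * (p.1 - o.1)) ^+ 2 + (2 * (p.2 - o.2)) ^+ 2
     - 4 * alw d e (psub p o) * bew d e (psub p o) * dot d e.
Proof.
move=> D; move: D; rewrite /Phi /mm /alw /bew /nrm2 /cross /psub /dot /= => D.
field; done.
Qed.

Lemma mm_lin {R : realType} (d e w : pt R) :
  mm d e w = (w.1 * (mm d e (1, 0)).1 + w.2 * (mm d e (0, 1)).1,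
              w.1 * (mm d e (1, 0)).2 + w.2 * (mm d e (0, 1)).2).
Proof. rewrite /mm /alw /bew /=; congr pair; ring. Qed.

Lemma mm_nz {R : realType} (d e w : pt R) :
  cross d e != 0 -> w != (0, 0) -> mm d e w != (0, 0).
Proof.
move=> D wn; apply/negP => /eqP E.
move: E; rewrite /mm => -[E1 E2].
have [h1 h2] : alw d e w * d.1 + (- bew d e w) * e.1 = 0 /\
               alw d e w * d.2 + (- bew d e w) * e.2 = 0 by split; lra.
have [a0 b0] := indep D h1 h2.
have c1 : w.1 * e.2 - w.2 * e.1 = 0.
  move: a0; rewrite /alw => /eqP; rewrite mulf_eq0 invr_eq0 (negPf D) orbF mulf_eq0 => /orP [] /eqP //.
  move=> /eqP; by rewrite pnatr_eq0.
have c2 : d.1 * w.2 - d.2 * w.1 = 0.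
  move: b0; rewrite /bew => /eqP; rewrite oppr_eq0 mulf_eq0 invr_eq0 (negPf D) orbF mulf_eq0 => /orP [] /eqP //.
  move=> /eqP; by rewrite pnatr_eq0.
move: wn; case: w c1 c2 {E1 E2 h1 h2 a0 b0} => w1 w2 /= c1 c2.
rewrite xpair_eqE negb_and => /orP [] /negP; apply; apply/eqP.
  apply: (mulIf D); rewrite mul0r.
  have -> : w1 * cross d e = (w1 * e.2 - w2 * e.1) * d.1 + (d.1 * w2 - d.2 * w1) * e.1
    by rewrite /cross; ring.
  by rewrite c1 c2; ring.
apply: (mulIf D); rewrite mul0r.
have -> : w2 * cross d e = (w1 * e.2 - w2 * e.1) * d.2 + (d.1 * w2 - d.2 * w1) * e.2
  by rewrite /cross; ring.
by rewrite c1 c2; ring.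
Qed.

Lemma pairB {R : realType} (p0 p0' d p : pt R) r :
  d != (0, 0) ->
  (MP (line p0 d) (line p0' d) p r <->
   cross (psub p (midpoint p0 p0')) d = 0 /\ cross (psub p0 p0') d ^+ 2 <= r * nrm2 d).
Proof.
move=> dn; have n0 := nz_sq_neq dn; have n0' := nz_sq dn; split.
  move=> [a [c [[s ->] [[t ->] [-> <-]]]]]; split.
    rewrite /cross /psub /midpoint /=; ring.
  set x := psub (p0.1 + s * d.1, _) _.
  have E : nrm2 x * nrm2 d - cross (psub p0 p0') d ^+ 2 = dot x d ^+ 2.
    rewrite /x /nrm2 /cross /dot /psub /=; ring.
  have := sqr_ge0 (dot x d); lra.
move=> [H1 H2].
move/(line_mem _ _ dn): H1 => [tau Ep].
have Hp : p = ((midpoint p0 p0').1 + tau * d.1, (midpoint p0 p0').2 + tau * d.2).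
  by case: p Ep => a b /= [-> ->].
set C := cross (psub p0 p0') d.
set X := dot (psub p0 p0') d.
have Hnn : 0 <= r * nrm2 d - C ^+ 2 by rewrite /C; lra.
set S := Num.sqrt (r * nrm2 d - C ^+ 2).
have HS : S ^+ 2 = r * nrm2 d - C ^+ 2 by rewrite sqr_sqrtr.
have Hr : r = (S ^+ 2 + C ^+ 2) / nrm2 d by rewrite HS; field.
set u := (S - X) / nrm2 d.
exists (p0.1 + (tau + u / 2) * d.1, p0.2 + (tau + u / 2) * d.2),
       (p0'.1 + (tau - u / 2) * d.1, p0'.2 + (tau - u / 2) * d.2).
split; first by exists (tau + u / 2).
split; first by exists (tau - u / 2).
split.
  by rewrite Hp /midpoint /=; congr pair; field.
rewrite Hr /u /X /C; move: n0; rewrite /nrm2 /psub /cross /dot /= => n0.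
field; done.
Qed.

Lemma locusA {R : realType} (o1 d1 e1 o2 d2 e2 p : pt R) :
  cross d1 e1 != 0 -> cross d2 e2 != 0 ->
  (rect_locus (line o1 d1) (line o1 e1) (line o2 d2) (line o2 e2) p <->
   Phi o1 d1 e1 p = Phi o2 d2 e2 p).
Proof.
move=> D1 D2; rewrite locus_MP; split.
  by move=> [r [/(pairA _ _ _ D1) <- /(pairA _ _ _ D2) <-]].
move=> E; exists (Phi o1 d1 e1 p); split; first exact/pairA.
by apply/pairA => //.
Qed.

Lemma nrm2_eq0 {R : realType} (u : pt R) : nrm2 u = 0 -> u = (0, 0).
Proof.
move=> H; apply/eqP; apply/negP => /negP /nz_sq; rewrite H ltxx //.
Qed.

Lemma full_nonpar {R : realType} (p1 d1 p3 d3 : pt R) (L2 L4 : pset R) :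
  d1 != (0, 0) -> d3 != (0, 0) ->
  rect_locus (line p1 d1) (line p3 d3) L2 L4 = @full_pset R -> cross d1 d3 != 0.
Proof.
move=> n1 n3 E; apply/negP => /eqP H.
have E3 : line p3 d3 = line p3 d1.
  apply: line_ext => //; first by rewrite cross_anti H oppr0.
  by rewrite /cross /psub /= !subrr; ring.
set m := midpoint p1 p3.
set p := (m.1 + d1.2, m.2 - d1.1).
have : rect_locus (line p1 d1) (line p3 d3) L2 L4 p by rewrite E.
rewrite locus_MP E3 => -[r [/(pairB _ _ _ _ n1) [H1 _] _]].
move: H1; rewrite /p /cross /psub /= => H1.
have := nz_sq n1; rewrite /nrm2.
have -> : d1.1 ^+ 2 + d1.2 ^+ 2 = (m.1 + d1.2 - m.1) * d1.2 - (m.2 - d1.1 - m.2) * d1.1 by ring.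
by rewrite H1 ltxx.
Qed.

Lemma alw0 {R : realType} (d e w : pt R) :
  cross d e != 0 -> alw d e w = 0 -> cross w e = 0.
Proof.
move=> D; rewrite /alw => /eqP; rewrite mulf_eq0 invr_eq0 (negPf D) orbF mulf_eq0.
by case/orP => /eqP // H; move: H => /eqP; rewrite pnatr_eq0.
Qed.

Lemma bew0 {R : realType} (d e w : pt R) :
  cross d e != 0 -> bew d e w = 0 -> cross d w = 0.
Proof.
move=> D; rewrite /bew => /eqP; rewrite mulf_eq0 invr_eq0 (negPf D) orbF mulf_eq0.
by case/orP => /eqP // H; move: H => /eqP; rewrite pnatr_eq0.
Qed.

Lemma line_same {R : realType} (o d e : pt R) :
  d != (0, 0) -> e != (0, 0) -> cross d e = 0 -> line o d = line o e.
Proof. move=> *; apply: line_ext => //; rewrite /cross /psub /= !subrr; ring. Qed.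

Lemma key2 {R : realType} (o d1 e1 d2 e2 : pt R) :
  d1 != (0, 0) -> e1 != (0, 0) -> d2 != (0, 0) -> e2 != (0, 0) ->
  cross d1 e1 != 0 -> cross d2 e2 != 0 ->
  (forall w, alw d1 e1 w * bew d1 e1 w * dot d1 e1 = alw d2 e2 w * bew d2 e2 w * dot d2 e2) ->
  ~ (line o d1 = line o d2 /\ line o e1 = line o e2) ->
  ~ (line o d1 = line o e2 /\ line o e1 = line o d2) ->
  dot d1 e1 = 0.
Proof.
move=> n1 m1 n2 m2 D1 D2 H N1 N2.
case: (eqVneq (dot d1 e1) 0) => // Hd; exfalso.
have Hs := H (d1.1 + e1.1, d1.2 + e1.2).
have a1 : alw d1 e1 (d1.1 + e1.1, d1.2 + e1.2) = 2.
  move: D1; rewrite /alw /cross /= => D1; field; done.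
have b1 : bew d1 e1 (d1.1 + e1.1, d1.2 + e1.2) = 2.
  move: D1; rewrite /bew /cross /= => D1; field; done.
rewrite a1 b1 in Hs.
have Hd2 : dot d2 e2 != 0.
  apply/eqP => Z; rewrite Z mulr0 in Hs; move/eqP: Hs; rewrite !mulf_eq0 (negPf Hd) orbF.
  by rewrite pnatr_eq0.
have Hx := H d1; have Hy := H e1.
have z1 : bew d1 e1 d1 = 0 by rewrite /bew; ring.
have z2 : alw d1 e1 e1 = 0 by rewrite /alw; ring.
rewrite z1 in Hx; rewrite z2 in Hy.
rewrite mulr0 mul0r in Hx; rewrite !mul0r in Hy.
move/esym/eqP: Hx; rewrite mulf_eq0 (negPf Hd2) orbF mulf_eq0 => /orP [] /eqP Hx;
move/esym/eqP: Hy; rewrite mulf_eq0 (negPf Hd2) orbF mulf_eq0 => /orP [] /eqP Hy.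
- have c1 := alw0 D2 Hx; have c2 := alw0 D2 Hy.
  move/negP: D1; apply; apply/eqP; apply: (par_cross m2 c1); by rewrite cross_anti c2 oppr0.
- have c1 := alw0 D2 Hx; have c2 := bew0 D2 Hy.
  apply: N2; split; apply: line_same => //; by rewrite cross_anti c2 oppr0.
- have c1 := bew0 D2 Hx; have c2 := alw0 D2 Hy.
  apply: N1; split; apply: line_same => //; by rewrite cross_anti c1 oppr0.
- have c1 := bew0 D2 Hx; have c2 := bew0 D2 Hy.
  move/negP: D1; apply; apply/eqP.
  have c1' : cross d1 d2 = 0 by rewrite cross_anti c1 oppr0.
  by apply: (par_cross n2 c1' c2).
Qed.

Lemma line_o {R : realType} (o d : pt R) : line o d o.
Proof. exists 0; case: o => a b; by rewrite /= !mul0r !addr0. Qed.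

Lemma psub0 {R : realType} (a b : pt R) : psub a b = (0, 0) -> a = b.
Proof. case: a => a1 a2; case: b => b1 b2; rewrite /psub /= => -[h1 h2]; congr pair; lra. Qed.

Lemma psub_add {R : realType} (o w : pt R) : psub (o.1 + w.1, o.2 + w.2) o = w.
Proof. case: w => a b; rewrite /psub /=; congr pair; ring. Qed.

Lemma Phi_self {R : realType} (o d e : pt R) : Phi o d e o = 0.
Proof. rewrite /Phi /psub !subrr /mm /alw /bew /nrm2 /=; ring. Qed.

Lemma part2f {R : realType} (p1 d1 p3 d3 p2 d2 p4 d4 : pt R) :
  d1 != (0, 0) -> d3 != (0, 0) -> d2 != (0, 0) -> d4 != (0, 0) ->
  ~ ((line p1 d1 = line p2 d2 /\ line p3 d3 = line p4 d4) \/
     (line p1 d1 = line p4 d4 /\ line p3 d3 = line p2 d2)) ->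
  rect_locus (line p1 d1) (line p3 d3) (line p2 d2) (line p4 d4) = @full_pset R ->
  orth_lines (line p1 d1) (line p3 d3) /\ orth_lines (line p2 d2) (line p4 d4) /\
  exists x, line p1 d1 x /\ line p3 d3 x /\ line p2 d2 x /\ line p4 d4 x.
Proof.
move=> n1 n3 n2 n4 N E.
have D13 := full_nonpar n1 n3 E.
have D24 : cross d2 d4 != 0.
  by apply: (full_nonpar (p1 := p2) (p3 := p4) (L2 := line p1 d1) (L4 := line p3 d3)) => //; rewrite -locus_sym.
have [o1 [E1 E3]] := meet p1 p3 n1 n3 D13.
have [o2 [E2 E4]] := meet p2 p4 n2 n4 D24.
rewrite E1 E3 E2 E4 in N E *.
have HP : forall p, Phi o1 d1 d3 p = Phi o2 d2 d4 p.
  move=> p; apply/locusA => //; by rewrite E.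
have eo : o1 = o2.
  have := HP o1; rewrite Phi_self => /esym /nrm2_eq0 H.
  apply: psub0; apply/eqP; apply/negP => /negP Hn.
  by have := mm_nz D24 Hn; rewrite H eqxx.
subst o2.
have HW : forall w, alw d1 d3 w * bew d1 d3 w * dot d1 d3 = alw d2 d4 w * bew d2 d4 w * dot d2 d4.
  move=> w; have := HP (o1.1 + w.1, o1.2 + w.2).
  rewrite (Phi_alt _ _ D13) (Phi_alt _ _ D24) psub_add => H.
  have : 4 * (alw d1 d3 w * bew d1 d3 w * dot d1 d3) = 4 * (alw d2 d4 w * bew d2 d4 w * dot d2 d4).
    move: H; set A := (_ ^+ 2 + _ ^+ 2) => H.
    apply/eqP; rewrite -subr_eq0; apply/eqP.
    have -> : 4 * (alw d1 d3 w * bew d1 d3 w * dot d1 d3) - 4 * (alw d2 d4 w * bew d2 d4 w * dot d2 d4)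
      = (A - 4 * alw d2 d4 w * bew d2 d4 w * dot d2 d4) - (A - 4 * alw d1 d3 w * bew d1 d3 w * dot d1 d3) by ring.
    by rewrite H subrr.
  by move/mulfI; apply; rewrite pnatr_eq0.
have O1 : dot d1 d3 = 0.
  apply: (key2 (o := o1) n1 n3 n2 n4 D13 D24 HW).
    by move=> [h1 h2]; apply: N; left.
  by move=> [h1 h2]; apply: N; right.
have O2 : dot d2 d4 = 0.
  apply: (key2 (o := o1) n2 n4 n1 n3 D24 D13) => //.
    by move=> [h1 h2]; apply: N; left; rewrite h1 h2.
  by move=> [h1 h2]; apply: N; right; rewrite h1 h2.
split; first by exists o1, d1, o1, d3.
split; first by exists o1, d2, o1, d4.
by exists o1; do !split; apply: line_o.
Qed.

Lemma orth_cross {R : realType} (e e' : pt R) :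
  e != (0, 0) -> e' != (0, 0) -> dot e e' = 0 -> cross e e' != 0.
Proof.
move=> n n' H; apply/eqP => C.
have := mulr_gt0 (nz_sq n) (nz_sq n').
have -> : nrm2 e * nrm2 e' = cross e e' ^+ 2 + dot e e' ^+ 2 by rewrite /nrm2 /cross /dot; ring.
by rewrite C H expr0n /= addr0 ltxx.
Qed.

Lemma orth_rep {R : realType} (L L' : pset R) x :
  orth_lines L L' -> L x -> L' x ->
  exists e e', e != (0, 0) /\ e' != (0, 0) /\ dot e e' = 0 /\ L = line x e /\ L' = line x e'.
Proof.
move=> [q [e [q' [e' [n [n' [-> [-> H]]]]]]]] h h'.
exists e, e'; do 3 (split => //); split.
  apply: line_ext => //; first by rewrite /cross; ring.
  by move: h; rewrite line_mem.
apply: line_ext => //; first by rewrite /cross; ring.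
by move: h'; rewrite line_mem.
Qed.

Lemma part2b {R : realType} (L1 L3 L2 L4 : pset R) :
  orth_lines L1 L3 -> orth_lines L2 L4 ->
  (exists x, L1 x /\ L3 x /\ L2 x /\ L4 x) ->
  rect_locus L1 L3 L2 L4 = @full_pset R.
Proof.
move=> O1 O2 [x [h1 [h3 [h2 h4]]]].
have [e [e' [n [n' [H [-> ->]]]]]] := orth_rep O1 h1 h3.
have [f [f' [m [m' [H' [-> ->]]]]]] := orth_rep O2 h2 h4.
have D1 := orth_cross n n' H; have D2 := orth_cross m m' H'.
apply: pset_ext => p; split => // _.
by apply/locusA => //; rewrite !Phi_alt // H H'; ring.
Qed.

Lemma iff_lin {R : realType} (A B C D c : R) :
  c != 0 -> A - B = c * (C - D) -> (A = B <-> C = D).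
Proof.
move=> cn E; split => H.
  move: E; rewrite H subrr => /esym /eqP; rewrite mulf_eq0 (negPf cn) /= subr_eq0 => /eqP //.
by move: E; rewrite H subrr mulr0 => /eqP; rewrite subr_eq0 => /eqP.
Qed.

Lemma orth_locus {R : realType} (o1 e1 f1 o2 e2 f2 : pt R) :
  e1 != (0, 0) -> f1 != (0, 0) -> e2 != (0, 0) -> f2 != (0, 0) ->
  dot e1 f1 = 0 -> dot e2 f2 = 0 -> o1 <> o2 ->
  is_line (rect_locus (line o1 e1) (line o1 f1) (line o2 e2) (line o2 f2)).
Proof.
move=> n1 m1 n2 m2 H1 H2 ne.
have D1 := orth_cross n1 m1 H1; have D2 := orth_cross n2 m2 H2.
have kn : (2 * (o2.1 - o1.1), 2 * (o2.2 - o1.2)) != (0, 0).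
  apply/negP => /eqP [a b]; apply: ne.
  case: o1 o2 a b => a1 a2 [b1 b2] /= a b; congr pair; lra.
have -> : rect_locus (line o1 e1) (line o1 f1) (line o2 e2) (line o2 f2)
  = (fun p : pt R => 2 * (o2.1 - o1.1) * p.1 + 2 * (o2.2 - o1.2) * p.2 = nrm2 o2 - nrm2 o1).
  apply: pset_ext => p; rewrite locusA // !Phi_alt // H1 H2.
  apply: (iff_lin (c := 4)); first by rewrite pnatr_eq0.
  rewrite /nrm2; ring.
exact: linear_line.
Qed.

Lemma trans_locus {R : realType} (o d e v : pt R) :
  d != (0, 0) -> e != (0, 0) -> cross d e != 0 -> v != (0, 0) ->
  is_line (rect_locus (line o d) (line o e)
            (line (o.1 + v.1, o.2 + v.2) d) (line (o.1 + v.1, o.2 + v.2) e)).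
Proof.
move=> n m D vn.
set X := mm d e (1, 0); set Y := mm d e (0, 1).
set Mv : pt R := (v.1 * X.1 + v.2 * Y.1, v.1 * X.2 + v.2 * Y.2).
set k1 := 2 * (X.1 * Mv.1 + X.2 * Mv.2).
set k2 := 2 * (Y.1 * Mv.1 + Y.2 * Mv.2).
set k0 := k1 * o.1 + k2 * o.2 + nrm2 Mv.
have hMv : Mv = mm d e v by rewrite (mm_lin d e v).
have kn : (k1, k2) != (0, 0).
  apply/negP => /eqP [e1 e2].
  have : v.1 * k1 + v.2 * k2 = 2 * nrm2 Mv by rewrite /k1 /k2 /nrm2 /Mv /=; ring.
  rewrite e1 e2 !mulr0 addr0 => /esym /eqP; rewrite mulf_eq0 pnatr_eq0 /= => /eqP /nrm2_eq0.
  rewrite hMv => /eqP; apply/negP; exact: mm_nz.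
have -> : rect_locus (line o d) (line o e)
            (line (o.1 + v.1, o.2 + v.2) d) (line (o.1 + v.1, o.2 + v.2) e)
  = (fun p : pt R => k1 * p.1 + k2 * p.2 = k0).
  apply: pset_ext => p; rewrite locusA //.
  apply: (iff_lin (c := 1)); first by rewrite oner_eq0.
  rewrite /Phi (mm_lin d e (psub p o)) (mm_lin d e (psub p _)) -/X -/Y.
  rewrite /k0 /k1 /k2 /Mv /nrm2 /psub /=; ring.
exact: linear_line.
Qed.

Lemma part3 {R : realType} (p1 d1 p3 d3 p2 d2 p4 d4 : pt R) :
  d1 != (0, 0) -> d3 != (0, 0) -> d2 != (0, 0) -> d4 != (0, 0) ->
  ~ par_lines (line p1 d1) (line p3 d3) -> ~ par_lines (line p2 d2) (line p4 d4) ->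
  (forall x y : pt R, line p1 d1 x -> line p3 d3 x -> line p2 d2 y -> line p4 d4 y -> x <> y) ->
  ((orth_lines (line p1 d1) (line p3 d3) /\ orth_lines (line p2 d2) (line p4 d4))
    \/ pair_translation (line p1 d1) (line p3 d3) (line p2 d2) (line p4 d4)) ->
  is_line (rect_locus (line p1 d1) (line p3 d3) (line p2 d2) (line p4 d4)).
Proof.
move=> n1 n3 n2 n4 NP13 NP24 Hxy Hc.
have D13 : cross d1 d3 != 0 by apply/negP => /eqP H; apply: NP13; apply/par_iff.
have D24 : cross d2 d4 != 0 by apply/negP => /eqP H; apply: NP24; apply/par_iff.
have [o1 [E1 E3]] := meet p1 p3 n1 n3 D13.
have [o2 [E2 E4]] := meet p2 p4 n2 n4 D24.
rewrite E1 E3 E2 E4 in Hxy Hc *.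
case: Hc => [[O1 O2] | [v [[F2 F4] | [F2 F4]]]].
- have [e [f [ne [nf [H [-> ->]]]]]] := orth_rep O1 (line_o o1 d1) (line_o o1 d3).
  have [e' [f' [ne' [nf' [H' [-> ->]]]]]] := orth_rep O2 (line_o o2 d2) (line_o o2 d4).
  apply: orth_locus => //.
  by apply: Hxy; apply: line_o.
- rewrite translate_line in F2; rewrite translate_line in F4.
  rewrite F2 F4; apply: trans_locus => //.
  apply/negP => /eqP hv.
  apply: (Hxy o1 (o1.1 + v.1, o1.2 + v.2)); try apply: line_o.
    by rewrite F2; apply: line_o.
    by rewrite F4; apply: line_o.
  by rewrite hv; case: (o1) => a b /=; congr pair; ring.
- rewrite translate_line in F2; rewrite translate_line in F4.
  rewrite locus_swap F2 F4; apply: trans_locus => //.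
  apply/negP => /eqP hv.
  apply: (Hxy o1 (o1.1 + v.1, o1.2 + v.2)); try apply: line_o.
    by rewrite F2; apply: line_o.
    by rewrite F4; apply: line_o.
  by rewrite hv; case: (o1) => a b /=; congr pair; ring.
Qed.

Definition concl1 {R : realType} (S : pset R) : Prop :=
  is_line S
  \/ (exists (L : pset R) (u v : pt R), is_line L /\ u <> v /\ L u /\ L v /\
        S = (fun q => L q /\ ~ open_segment u v q))
  \/ (exists x : pt R, S = (fun q => q = x))
  \/ S = @empty_pset R.

Lemma param_uniq {R : realType} (m d : pt R) (t s : R) :
  d != (0, 0) -> (m.1 + t * d.1, m.2 + t * d.2) = (m.1 + s * d.1, m.2 + s * d.2) -> t = s.
Proof.
move=> dn [e1 e2].
have : t - s = 0.
  apply: (mul_both dn); rewrite mulrBl; lra.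
move/eqP; rewrite subr_eq0 => /eqP //.
Qed.

Lemma quad_set {R : realType} (m d : pt R) (g : pt R -> R) (A B C K : R) :
  d != (0, 0) -> 0 < A ->
  (forall t, g (m.1 + t * d.1, m.2 + t * d.2) = A * t ^+ 2 + B * t + C) ->
  concl1 (fun q => line m d q /\ K <= g q).
Proof.
move=> dn A0 Hg.
have An : A != 0 by rewrite gt_eqF.
set Dl := B ^+ 2 - 4 * A * (C - K).
case: (lerP Dl 0) => HD.
  left; exists m, d; split => //; apply: pset_ext => q; split; first by case.
  move=> Hl; split => //; case: Hl => t ->; rewrite Hg.
  have E : 4 * A * (A * t ^+ 2 + B * t + C - K) = (2 * A * t + B) ^+ 2 - Dl by rewrite /Dl; ring.
  have H4 : 0 <= 4 * A * (A * t ^+ 2 + B * t + C - K).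
    by rewrite E; have := sqr_ge0 (2 * A * t + B); lra.
  rewrite pmulr_rge0 in H4; last by lra.
  lra.
right; left.
set S := Num.sqrt Dl.
have S0 : 0 < S by rewrite sqrtr_gt0.
have HS : S ^+ 2 = Dl by rewrite sqr_sqrtr // ltW.
have HK : K = C - (B ^+ 2 - S ^+ 2) / (4 * A) by rewrite HS /Dl; field.
set t1 := (- B - S) / (2 * A).
set t2 := (- B + S) / (2 * A).
have Hfac : forall t, A * t ^+ 2 + B * t + C - K = A * ((t - t1) * (t - t2)).
  by move=> t; rewrite HK /t1 /t2; field.
have t12 : t1 < t2.
  rewrite /t1 /t2 ltr_pM2r ?invr_gt0; last by lra.
  lra.
set u := (m.1 + t1 * d.1, m.2 + t1 * d.2).
set v := (m.1 + t2 * d.1, m.2 + t2 * d.2).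
exists (line m d), u, v.
split; first by exists m, d.
split; first by move=> /(param_uniq dn) E; move: t12; rewrite E ltxx.
split; first by exists t1.
split; first by exists t2.
apply: pset_ext => q; split.
  move=> [[t Eq] HK']; split; first by exists t.
  move=> [tau [/andP [ta tb] Eo]].
  have Et : t = (1 - tau) * t1 + tau * t2.
    apply: (param_uniq (m := m) dn); rewrite -Eq Eo /u /v /=; congr pair; ring.
  move: HK'; rewrite Eq Hg => HK'.
  have : 0 <= A * ((t - t1) * (t - t2)) by rewrite -Hfac; lra.
  rewrite pmulr_rge0 //.
  have -> : (t - t1) * (t - t2) = - ((tau * (t2 - t1)) * ((1 - tau) * (t2 - t1))) by rewrite Et; ring.
  rewrite oppr_ge0 => H.
  have : 0 < (tau * (t2 - t1)) * ((1 - tau) * (t2 - t1)).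
    by apply: mulr_gt0; apply: mulr_gt0; lra.
  lra.
move=> [[t Eq] Hno]; split; first by exists t.
rewrite Eq Hg.
have : 0 <= A * ((t - t1) * (t - t2)).
  apply: mulr_ge0; first by lra.
  case: (lerP t t1) => h1.
    by apply: mulr_le0; lra.
  case: (lerP t2 t) => h2.
    by apply: mulr_ge0; lra.
  exfalso; apply: Hno.
  exists ((t - t1) / (t2 - t1)); split.
    apply/andP; split; first by apply: divr_gt0; lra.
    by rewrite ltr_pdivrMr; lra.
  rewrite Eq /u /v /=; congr pair; field; rewrite subr_eq0 gt_eqF //.
rewrite -Hfac; lra.
Qed.

Lemma part1 {R : realType} (p1 d1 p3 d3 p2 d2 p4 d4 : pt R) :
  d1 != (0, 0) -> d3 != (0, 0) -> d2 != (0, 0) -> d4 != (0, 0) ->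
  cross d1 d3 = 0 ->
  concl1 (rect_locus (line p1 d1) (line p3 d3) (line p2 d2) (line p4 d4)).
Proof.
move=> n1 n3 n2 n4 H13.
have -> : line p3 d3 = line p3 d1 by apply: line_same => //; rewrite cross_anti H13 oppr0.
set m := midpoint p1 p3; set h1 := cross (psub p1 p3) d1 ^+ 2.
have M1 : forall p r, MP (line p1 d1) (line p3 d1) p r <-> line m d1 p /\ h1 <= r * nrm2 d1.
  by move=> p r; rewrite (pairB _ _ _ _ n1) (line_mem _ _ n1).
case: (eqVneq (cross d2 d4) 0) => H24.
  have -> : line p4 d4 = line p4 d2 by apply: line_same => //; rewrite cross_anti H24 oppr0.
  set m' := midpoint p2 p4; set h2 := cross (psub p2 p4) d2 ^+ 2.
  have M2 : forall p r, MP (line p2 d2) (line p4 d2) p r <-> line m' d2 p /\ h2 <= r * nrm2 d2.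
    by move=> p r; rewrite (pairB _ _ _ _ n2) (line_mem _ _ n2).
  have LA : rect_locus (line p1 d1) (line p3 d1) (line p2 d2) (line p4 d2)
     = (fun q => line m d1 q /\ line m' d2 q).
    apply: pset_ext => q; rewrite locus_MP; split.
      by move=> [r [/M1 [a _] /M2 [b _]]].
    move=> [a b]; exists (h1 / nrm2 d1 + h2 / nrm2 d2); split.
      apply/M1; split => //.
      rewrite mulrDl divfK ?nz_sq_neq //.
      have : 0 <= h2 / nrm2 d2 * nrm2 d1.
        apply: mulr_ge0; last exact: ltW (nz_sq n1).
        apply: divr_ge0; [exact: sqr_ge0 | exact: ltW (nz_sq n2)].
      lra.
    apply/M2; split => //.
    rewrite mulrDl (divfK (nz_sq_neq n2)).
    have : 0 <= h1 / nrm2 d1 * nrm2 d2.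
      apply: mulr_ge0; last exact: ltW (nz_sq n2).
      apply: divr_ge0; [exact: sqr_ge0 | exact: ltW (nz_sq n1)].
    lra.
  rewrite LA.
  case: (eqVneq (cross d1 d2) 0) => H12.
    case: (eqVneq (cross (psub m' m) d1) 0) => Hm.
      left; rewrite -(line_ext n1 n2 H12 Hm).
      exists m, d1; split => //; apply: pset_ext => q; split; first by case.
      by move=> h; split.
    right; right; right; apply: pset_ext => q; split => //.
    move=> [a b]; move: a b; rewrite !line_mem // => a b.
    have c : cross (psub q m') d1 = 0 by apply: (par_cross n2 b); rewrite cross_anti H12 oppr0.
    move: c; rewrite (cross_psub q m m') a sub0r => /eqP; rewrite oppr_eq0 => /eqP c.
    by move/eqP: Hm.
  right; right; left.
  have [o [Ea Eb]] := meet m m' n1 n2 H12.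
  exists o; apply: pset_ext => q; rewrite Ea Eb; split.
    by move=> [a b]; apply: (meet_uniq H12 a b).
  by move=> ->; split; apply: line_o.
have [o2 [E2 E4]] := meet p2 p4 n2 n4 H24.
rewrite E2 E4.
have LB : rect_locus (line p1 d1) (line p3 d1) (line o2 d2) (line o2 d4)
   = (fun q => line m d1 q /\ h1 / nrm2 d1 <= Phi o2 d2 d4 q).
  apply: pset_ext => q; rewrite locus_MP; split.
    move=> [r [/M1 [a b] /(pairA _ _ _ H24) c]]; split => //.
    by rewrite ler_pdivrMr ?nz_sq // -c.
  move=> [a b]; exists (Phi o2 d2 d4 q); split; last exact/pairA.
  by apply/M1; split => //; rewrite -ler_pdivrMr ?nz_sq.
rewrite LB.
apply: (quad_set (A := nrm2 (mm d2 d4 d1))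
                 (B := 2 * dot (mm d2 d4 (psub m o2)) (mm d2 d4 d1))
                 (C := nrm2 (mm d2 d4 (psub m o2)))) => //.
  exact: nz_sq (mm_nz H24 n1).
move=> t.
rewrite /Phi (mm_lin d2 d4 (psub (m.1 + t * d1.1, m.2 + t * d1.2) o2))
  (mm_lin d2 d4 d1) (mm_lin d2 d4 (psub m o2)).
set X := mm d2 d4 (1, 0); set Y := mm d2 d4 (0, 1).
rewrite /nrm2 /dot /psub /=; ring.
Qed.

Unset Implicit Arguments.

Theorem proposition4p4 (R : realType) (L1 L3 L2 L4 : pset R) :
  is_line L1 -> is_line L3 -> is_line L2 -> is_line L4 ->
  L1 <> L3 -> L2 <> L4 ->
  ~ ((L1 = L2 /\ L3 = L4) \/ (L1 = L4 /\ L3 = L2)) ->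
  (* (1) *)
  ((par_lines L1 L3 \/ par_lines L2 L4) ->
     is_line (rect_locus L1 L3 L2 L4)
     \/ (exists (L : pset R) (u v : pt R), is_line L /\ u <> v /\ L u /\ L v /\
           rect_locus L1 L3 L2 L4 = (fun q => L q /\ ~ open_segment u v q))
     \/ (exists x : pt R, rect_locus L1 L3 L2 L4 = (fun q => q = x))
     \/ rect_locus L1 L3 L2 L4 = @empty_pset R)
  /\
  (* (2) *)
  (rect_locus L1 L3 L2 L4 = @full_pset R <->
     orth_lines L1 L3 /\ orth_lines L2 L4 /\
     exists x : pt R, L1 x /\ L3 x /\ L2 x /\ L4 x)
  /\
  (* (3) *)
  (~ par_lines L1 L3 -> ~ par_lines L2 L4 ->
   (forall x y : pt R, L1 x -> L3 x -> L2 y -> L4 y -> x <> y) ->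
   ((orth_lines L1 L3 /\ orth_lines L2 L4) \/ pair_translation L1 L3 L2 L4) ->
   is_line (rect_locus L1 L3 L2 L4)).
Proof.
move=> [p1 [d1 [n1 ->]]] [p3 [d3 [n3 ->]]] [p2 [d2 [n2 ->]]] [p4 [d4 [n4 ->]]] N13 N24 Np.
split.
  case=> P.
    have H : cross d1 d3 = 0 by move: P; rewrite par_iff.
    exact: part1.
  have H : cross d2 d4 = 0 by move: P; rewrite par_iff.
  rewrite locus_sym; exact: part1.
split.
  split; first by apply: part2f.
  by move=> [O1 [O2 X]]; apply: part2b.
by move=> *; apply: part3.
Qed.
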